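(* Let $r\ge 3$ be an integer and $p\ge 5$ an odd prime. Let $\mathbb{K}_1=\mathbb{Q}(\zeta_{2^r}+\zeta_{2^r}^{-1})$, $e_0=1$, $e_i=\zeta_{2^r}^i+\zeta_{2^r}^{-i}$ for $i\ge1$, $n_1=2^{r-2}$; let $\mathbb{K}_2=\mathbb{Q}(\zeta_p+\zeta_p^{-1})$, $b_j=\zeta_p^j+\zeta_p^{-j}$ for $j\ge 1$, $n_2=\frac{p-1}{2}$. Let $\mathbb{K}=\mathbb{K}_1\mathbb{K}_2$ be the compositum, $n=n_1n_2=[\mathbb{K}:\mathbb{Q}]$, and let $\mathcal{I}\subseteq\mathcal{O}_{\mathbb{K}}$ be the $\mathbb{Z}$-module with $\mathbb{Z}$-basis $$\gamma=\{e_0b_1,e_0b_2,\dots,e_0b_{n_2-1},\,2e_0b_{n_2},\;e_1b_1,\dots,e_1b_{n_2},\;\dots,\;e_{n_1-1}b_1,\dots,e_{n_1-1}b_{n_2}\},$$ i.e. all products $e_ib_j$ ($0\le i\le n_1-1$, $1\le j\le n_2$) except that $e_0b_{n_2}$ is replaced by $2e_0b_{n_2}$. Let $\alpha=(2-e_1)(2-b_1)$. Then the lattice $\frac{1}{\sqrt{2^{r-1}p}}\,\sigma_\alpha(\mathcal{I})\subseteq\mathbb{R}^n$ is a rotated $D_n$-lattice.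
   Context: $\zeta_m=e^{2\pi i/m}$. $\mathbb{K}$ is totally real Galois with Galois group $\{\sigma_1,\dots,\sigma_n\}$; $\alpha$ is totally positive. The twisted homomorphism is $\sigma_\alpha(x)=(\sqrt{\sigma_1(\alpha)}\sigma_1(x),\dots,\sqrt{\sigma_n(\alpha)}\sigma_n(x))\in\mathbb{R}^n$. $D_n=\{(x_1,\dots,x_n)\in\mathbb{Z}^n:\sum x_i \text{ even}\}$. A lattice $\Lambda\subseteq\mathbb{R}^n$ is a rotated $D_n$-lattice if $\Lambda=R(D_n)$ for some orthogonal linear map $R$ of $\mathbb{R}^n$. *)

(* Defs.v *)
From HB Require Import structures.
From mathcomp Require Import all_boot all_order all_algebra.
From mathcomp Require Import all_classical all_reals all_analysis.
Set Implicit Arguments. Unset Strict Implicit. Unset Printing Implicit Defensive.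
Import Order.TTheory GRing.Theory Num.Theory.
Local Open Scope ring_scope.

(* The Galois group of K is Gal(K1) x Gal(K2); its elements are indexed by
   (s, t) with s < 2^(r-2), t < (p-1)/2, acting by
     zeta_{2^r} |-> zeta_{2^r}^(2s+1),  zeta_p |-> zeta_p^(t+1). *)

(* sigma_{s}(e_i): e_0 = 1, e_i = zeta^i + zeta^-i = 2 cos(2 pi i/2^r). *)
Definition emb_e (R : realType) (r s i : nat) : R :=
  if i == 0%N then 1
  else 2 * cos (2 * pi * (((2 * s + 1) * i)%N)%:R / (2 ^ r)%:R).

Definition emb_b (R : realType) (p t j : nat) : R :=
  2 * cos (2 * pi * (((t + 1) * j)%N)%:R / p%:R).

Definition emb_alpha (R : realType) (r p s t : nat) : R :=
  (2 - emb_e R r s 1) * (2 - emb_b R p t 1).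

(* the basis element gamma_{i,j} = e_i b_{j+1} (i < n1, j < n2), except
   gamma_{0,n2-1} = 2 e_0 b_{n2}. *)
Definition gamma_coef (R : realType) (n2 i j : nat) : R :=
  if (i == 0%N) && (j.+1 == n2) then 2 else 1.

Definition sigma_alpha_gamma (R : realType) (r p : nat)
    (i : 'I_(2 ^ (r - 2))) (j : 'I_((p - 1) %/ 2)) : 'rV[R]_(2 ^ (r - 2) * ((p - 1) %/ 2)) :=
  mxvec (\matrix_(s < 2 ^ (r - 2), t < (p - 1) %/ 2)
           (Num.sqrt (emb_alpha R r p s t) *
            (gamma_coef R ((p - 1) %/ 2) i j * emb_e R r s i * emb_b R p t j.+1))).

Definition scaled_lattice (R : realType) (r p : nat)
    (v : 'rV[R]_(2 ^ (r - 2) * ((p - 1) %/ 2))) : Prop :=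
  exists k : 'M[int]_(2 ^ (r - 2), (p - 1) %/ 2),
    v = (Num.sqrt (((2 ^ (r - 1) * p)%N)%:R))^-1 *:
        \sum_(i < 2 ^ (r - 2)) \sum_(j < (p - 1) %/ 2)
           (k i j)%:~R *: @sigma_alpha_gamma R r p i j.

Definition Dn (n : nat) (d : 'rV[int]_n) : Prop := (2 %| \sum_(i < n) d 0 i)%Z.

(* L is a rotated D_n-lattice: L = Q(D_n) for an orthogonal Q
   (row-vector convention: x |-> x *m Q). *)
Definition rotated_Dn (R : realType) (n : nat) (L : 'rV[R]_n -> Prop) : Prop :=
  exists Q : 'M[R]_n, Q *m Q^T = 1%:M /\
    forall v, L v <-> exists d, Dn d /\ v = map_mx intr d *m Q.

(* Main.v *)
Require Import Defs.
From HB Require Import structures.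
From mathcomp Require Import all_boot all_order all_algebra.
From mathcomp Require Import all_classical all_reals all_analysis.
From mathcomp Require Import ring lra zify.
Set Implicit Arguments. Unset Strict Implicit. Unset Printing Implicit Defensive.
Import Order.TTheory GRing.Theory Num.Theory.
Local Open Scope ring_scope.
Lemma sin_natpi (R : realType) (n : nat) : sin (n%:R * pi) = 0 :> R.
Proof.
by rewrite mulr_natl -[pi *+ n]add0r (alternatingn (@sinDpi R)) sin0 mulr0.
Qed.
Lemma sin_pos (R : realType) (c M : nat) : (0 < c)%N -> (c < M)%N ->
  0 < sin (c%:R * (pi / M%:R)) :> R.
Proof.
move=> c0 cM.
have M0 : 0 < M%:R :> R by rewrite ltr0n (ltn_trans c0 cM).
have c0' : 0 < c%:R :> R by rewrite ltr0n.
apply: sin_gt0_pi; apply/andP; split.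
  apply: mulr_gt0 => //; apply: divr_gt0 => //; exact: pi_gt0.
rewrite mulrA ltr_pdivrMr // mulrC ltr_pM2l ?pi_gt0 // ltr_nat //.
Qed.
Lemma sin_diff_ne0 (R : realType) (a b M : nat) : a != b -> (a < M)%N -> (b < M)%N ->
  sin ((a%:R - b%:R) * (pi / M%:R)) != 0 :> R.
Proof.
move=> ab aM bM; case: (ltngtP a b) => [lt|lt|eq]; last by rewrite eq eqxx in ab.
- rewrite -opprB -natrB; last exact: ltnW.
  rewrite mulNr sinN oppr_eq0.
  apply/negP => /eqP h.
  have : 0 < sin ((b - a)%:R * (pi / M%:R)) :> R.
    apply: sin_pos; first by rewrite subn_gt0.
    by rewrite (leq_ltn_trans (leq_subr _ _)).
  by rewrite h ltxx.
- rewrite -natrB; last exact: ltnW.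
  apply/negP => /eqP h.
  have : 0 < sin ((a - b)%:R * (pi / M%:R)) :> R.
    apply: sin_pos; first by rewrite subn_gt0.
    by rewrite (leq_ltn_trans (leq_subr _ _)).
  by rewrite h ltxx.
Qed.

Lemma tele (R : realType) (y : R) (a N : nat) :
  \sum_(i < N) (2 * sin y * cos ((a + 2*i)%:R * y)) =
  sin ((a + 2*N)%:R * y - y) - sin (a%:R * y - y).
Proof.
rewrite -(big_mkord xpredT (fun i => 2 * sin y * cos ((a + 2*i)%:R * y))).
have -> : sin (a%:R * y - y) = sin ((a + 2*0)%:R * y - y) by rewrite muln0 addn0.
rewrite -(telescope_sumr (fun i => sin ((a + 2*i)%:R * y - y))); last exact: leq0n.
apply: eq_bigr => i _.
have -> : (a + 2 * i.+1)%:R * y - y = (a + 2*i)%:R * y + y.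
idtac.
ring.
rewrite sinD sinB.
ring.
Qed.
Lemma sum_cos_odd (R : realType) (y : R) N : sin y != 0 -> sin ((2*N)%:R * y) = 0 ->
  \sum_(s < N) cos ((2*s+1)%:R * y) = 0.
Proof.
move=> sy s0; have := tele y 1 N.
have -> : ((1 + 2 * N)%:R * y - y) = (2*N)%:R * y by ring.
have -> : 1%:R * y - y = 0 by ring.
rewrite s0 sin0 subr0 -big_distrr /=.
under eq_bigr do rewrite addnC.
move/eqP; rewrite mulf_eq0 mulf_eq0 (negbTE sy) pnatr_eq0 /=.
by move/eqP.
Qed.

Lemma sum_cos_even (R : realType) (y : R) N : sin y != 0 -> sin ((2*N+1)%:R * y) = 0 ->
  \sum_(t < N) cos ((2*t+2)%:R * y) = - 2^-1.
Proof.
move=> sy s0; have := tele y 2 N.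
have -> : ((2 + 2 * N)%:R * y - y) = (2*N+1)%:R * y by ring.
have -> : 2%:R * y - y = y by ring.
rewrite s0 sub0r -big_distrr /=.
under eq_bigr do rewrite addnC.
move=> h.
have h2 : 2 * sin y != 0 by rewrite mulf_eq0 negb_or sy pnatr_eq0.
apply: (mulfI h2); rewrite h mulrN mulrAC divff ?mul1r; [by [] | by rewrite pnatr_eq0].
Qed.
Definition Gn (R : realType) (r k s : nat) : R :=
  2 * sin (((2*k+1)*(2*s+1))%:R * (pi / (2^r)%:R)).
Definition Fn (R : realType) (p l t : nat) : R :=
  2 * sin (((2 * l + 1)*(t+1))%:R * (pi / p%:R)).

Lemma prod_sin (R : realType) (A B : R) :
  2 * sin A * (2 * sin B) = 2 * cos (A - B) - 2 * cos (A + B).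
Proof. rewrite cosB cosD; ring. Qed.

Lemma sin_natBpi (R : realType) (a b : nat) : sin ((a%:R - b%:R) * pi) = 0 :> R.
Proof. by rewrite mulrBl sinB !sin_natpi !mul0r mulr0 subrr. Qed.

Lemma pow_r (r : nat) : (3 <= r)%N -> (2^r = 4 * 2^(r-2))%N /\ (2^(r-1) = 2 * 2^(r-2))%N.
Proof.
move=> r3; have -> : r = ((r - 2) + 2)%N by rewrite subnK // ltnW.
rewrite addnK expnD; split; first by rewrite mulnC.
have -> : (r - 2 + 2 - 1 = (r - 2).+1)%N by rewrite addn2.
by rewrite expnS.
Qed.

Lemma orthoG (R : realType) (r k k' : nat) : (3 <= r)%N -> (k < 2^(r-2))%N -> (k' < 2^(r-2))%N ->
  \sum_(s < (2^(r-2))%N) Gn R r k s * Gn R r k' s = (k == k')%:R * (2^(r-1))%N%:R.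
Proof.
move=> r3 kn k'n; have [e4 e2] := pow_r r3.
set n1 := (2^(r-2))%N in kn k'n e4 e2 *.
set w : R := pi / (2^r)%:R.
have wpi : (4 * n1)%:R * w = pi.
  rewrite -e4 /w mulrCA divff ?mulr1 //; by rewrite pnatr_eq0 expn_eq0.
set y1 : R := ((2*k)%:R - (2*k')%:R) * w.
set y2 : R := (2*(k+k'+1))%:R * w.
have -> : \sum_(s < n1) Gn R r k s * Gn R r k' s =
   2 * \sum_(s < n1) cos ((2*s+1)%:R * y1) - 2 * \sum_(s < n1) cos ((2*s+1)%:R * y2).
  rewrite !big_distrr -sumrB; apply: eq_bigr => s _.
  rewrite /Gn prod_sin -/w; congr (2 * cos _ - 2 * cos _); rewrite /y1 /y2; ring.
have -> : \sum_(s < n1) cos ((2*s+1)%:R * y2) = 0.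
  apply: sum_cos_odd.
    apply/negP => /eqP h.
    have : 0 < sin ((2*(k+k'+1))%:R * (pi / (2^r)%:R)) :> R.
      apply: sin_pos; first by rewrite muln_gt0 addn1.
      rewrite e4; lia.
    by rewrite -/w -/y2 h ltxx.
  have -> : (2*n1)%:R * y2 = (k+k'+1)%:R * ((4*n1)%:R * w) :> R by rewrite /y2; ring.
  by rewrite wpi sin_natpi.
case: (eqVneq k k') => [kk|kk'].
  rewrite /y1 kk subrr mul0r.
  under eq_bigr do rewrite mulr0 cos0.
  by rewrite sumr_const card_ord mulr0 subr0 mul1r e2 natrM.
have -> : \sum_(s < n1) cos ((2*s+1)%:R * y1) = 0.
  apply: sum_cos_odd.
    apply: sin_diff_ne0; [by rewrite eqn_pmul2l | rewrite e4; lia | rewrite e4; lia].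
  have -> : (2*n1)%:R * y1 = (k%:R - k'%:R) * ((4*n1)%:R * w) :> R by rewrite /y1; ring.
  by rewrite wpi sin_natBpi.
by rewrite mulr0 subrr mul0r.
Qed.
Lemma p_odd (p : nat) : prime p -> (5 <= p)%N -> p = (2 * ((p - 1) %/ 2) + 1)%N.
Proof.
move=> pp p5.
have po : odd p.
  by case: (boolP (odd p)) => // /(prime_oddPn pp) e; rewrite e in p5.
have : (p %% 2 = 1)%N by rewrite modn2 po.
lia.
Qed.

Lemma orthoF (R : realType) (p l l' : nat) : prime p -> (5 <= p)%N ->
  (l < (p - 1) %/ 2)%N -> (l' < (p - 1) %/ 2)%N ->
  \sum_(t < ((p - 1) %/ 2)%N) Fn R p l t * Fn R p l' t = (l == l')%:R * p%:R.
Proof.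
move=> pp p5 ln l'n; have ep := p_odd pp p5.
set n2 := ((p - 1) %/ 2)%N in ln l'n ep *.
set v : R := pi / p%:R.
have vpi : p%:R * v = pi.
  rewrite /v mulrCA divff ?mulr1 //; by rewrite pnatr_eq0; apply/eqP => e; rewrite e in p5.
set y1 : R := (l%:R - l'%:R) * v.
set y2 : R := (l + l' + 1)%:R * v.
have -> : \sum_(t < n2) Fn R p l t * Fn R p l' t =
   2 * \sum_(t < n2) cos ((2 * t + 2)%:R * y1) - 2 * \sum_(t < n2) cos ((2 * t + 2)%:R * y2).
  rewrite !big_distrr -sumrB; apply: eq_bigr => t _.
  rewrite /Fn prod_sin -/v; congr (2 * cos _ - 2 * cos _); rewrite /y1 /y2; ring.
have -> : \sum_(t < n2) cos ((2 * t + 2)%:R * y2) = - 2^-1.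
  apply: sum_cos_even.
    apply/negP => /eqP h.
    have : 0 < sin ((l + l' + 1)%:R * (pi / p%:R)) :> R.
      apply: sin_pos; [by rewrite addn1 | lia].
    by rewrite -/v -/y2 h ltxx.
  have -> : (2 * n2 + 1)%:R * y2 = (l + l' + 1)%:R * (p%:R * v) :> R.
    by rewrite /y2 {1}ep; ring.
  by rewrite vpi sin_natpi.
case: (eqVneq l l') => [ll|ll'].
  rewrite /y1 ll subrr mul0r.
  under eq_bigr do rewrite mulr0 cos0.
  rewrite sumr_const card_ord mul1r {1}ep natrD natrM.
  by field.
have -> : \sum_(t < n2) cos ((2 * t + 2)%:R * y1) = - 2^-1.
  apply: sum_cos_even.
    apply: sin_diff_ne0; [by [] | lia | lia].
  have -> : (2 * n2 + 1)%:R * y1 = (l%:R - l'%:R) * (p%:R * v) :> R.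
    by rewrite /y1 {1}ep; ring.
  by rewrite vpi sin_natBpi.
by rewrite mul0r subrr.
Qed.
Lemma sqrt_half (R : realType) (y : R) : 0 <= sin y ->
  Num.sqrt (2 - 2 * cos (2 * y)) = 2 * sin y.
Proof.
move=> sy.
have -> : 2 - 2 * cos (2 * y) = (2 * sin y) ^+ 2.
  have -> : 2 * y = y *+ 2 by rewrite mulr_natl.
  rewrite cos_mulr2n cos2sin2; ring.
rewrite sqrtr_sqr ger0_norm //; apply: mulr_ge0 => //.
Qed.

Lemma X_eq (R : realType) (r s i : nat) : (3 <= r)%N -> (s < 2^(r-2))%N ->
  Num.sqrt (2 - emb_e R r s 1) * emb_e R r s i =
  Gn R r i s - (if i is i'.+1 then Gn R r i' s else 0).
Proof.
move=> r3 sn; have [e4 e2] := pow_r r3.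
set w : R := pi / (2^r)%:R.
set y : R := (2 * s + 1)%:R * w.
have e1 : emb_e R r s 1 = 2 * cos (2 * y).
  rewrite /emb_e /= /y /w; congr (2 * cos _); ring.
have sy : 0 < sin y.
  apply: sin_pos; [by rewrite addn1 | rewrite e4; lia].
rewrite e1 sqrt_half; last exact: ltW.
case: i => [|i].
  rewrite /emb_e /= mulr1 subr0 /Gn -/w; congr (2 * sin _); rewrite /y; ring.
have -> : emb_e R r s i.+1 = 2 * cos ((2 * i.+1)%:R * y).
  rewrite /emb_e /= /y /w; congr (2 * cos _); ring.
rewrite /Gn -/w.
have -> : ((2 * i.+1 + 1) * (2 * s + 1))%:R * w = (2 * i.+1)%:R * y + y by rewrite /y; ring.
have -> : ((2 * i + 1) * (2 * s + 1))%:R * w = (2 * i.+1)%:R * y - y by rewrite /y; ring.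
rewrite sinD sinB; ring.
Qed.

Lemma W_eq (R : realType) (p t j : nat) : prime p -> (5 <= p)%N -> (t < (p - 1) %/ 2)%N ->
  Num.sqrt (2 - emb_b R p t 1) * emb_b R p t j.+1 = Fn R p j.+1 t - Fn R p j t.
Proof.
move=> pp p5 tn; have ep := p_odd pp p5.
set v : R := pi / p%:R.
set z : R := (t + 1)%:R * v.
have e1 : emb_b R p t 1 = 2 * cos (2 * z).
  rewrite /emb_b /= /z /v; congr (2 * cos _); ring.
have sz : 0 < sin z.
  apply: sin_pos; [by rewrite addn1 | lia].
rewrite e1 sqrt_half; last exact: ltW.
have -> : emb_b R p t j.+1 = 2 * cos ((2 * j.+1)%:R * z).
  rewrite /emb_b /= /z /v; congr (2 * cos _); ring.
rewrite /Fn -/v.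
have -> : ((2 * j.+1 + 1) * (t + 1))%:R * v = (2 * j.+1)%:R * z + z by rewrite /z; ring.
have -> : ((2 * j + 1) * (t + 1))%:R * v = (2 * j.+1)%:R * z - z by rewrite /z; ring.
rewrite sinD sinB; ring.
Qed.

Lemma Fn_last (R : realType) (p t : nat) : prime p -> (5 <= p)%N ->
  Fn R p ((p - 1) %/ 2) t = 0.
Proof.
move=> pp p5; have ep := p_odd pp p5.
rewrite /Fn.
have -> : ((2 * ((p - 1) %/ 2) + 1) * (t + 1))%:R * (pi / p%:R) = (t + 1)%:R * (p%:R * (pi / p%:R)) :> R.
  by rewrite -ep; ring.
rewrite [p%:R * _]mulrCA divff ?mulr1; first by rewrite sin_natpi mulr0.
by rewrite pnatr_eq0; apply/eqP => e; rewrite e in p5.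
Qed.
Definition A1 (n : nat) : 'M[int]_n :=
  \matrix_(i, k) ((((i : nat) == k) : nat)%:R - (((k : nat).+1 == i) : nat)%:R).
Definition A2 (n : nat) : 'M[int]_n :=
  \matrix_(j, l) ((((l : nat) == j.+1) : nat)%:R - (((l : nat) == j) : nat)%:R).

Lemma sum_delta (T : pzRingType) n (f : nat -> T) (j : nat) :
  \sum_(k < n) (((k : nat) == j) : nat)%:R * f k = ((j < n)%N : nat)%:R * f j.
Proof.
case: (ltnP j n) => jn.
  rewrite (bigD1 (Ordinal jn)) //= eqxx mul1r big1 ?addr0 ?mul1r // => k.
  by rewrite -val_eqE /= => /negbTE ->; rewrite mul0r.
rewrite big1 ?mul0r // => k _.
have : (k : nat) != j by rewrite neq_ltn (leq_trans (ltn_ord k) jn).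
by move/negbTE ->; rewrite mul0r.
Qed.

Lemma A1_sum (T : pzRingType) n (i : 'I_n) (f : nat -> T) :
  \sum_(k < n) (A1 n i k)%:~R * f k = f i - (if (i : nat) is i'.+1 then f i' else 0).
Proof.
under eq_bigr => k _ do rewrite mxE rmorphB /= !rmorph_nat mulrBl.
rewrite sumrB.
under eq_bigr => k _ do rewrite eq_sym.
rewrite sum_delta ltn_ord mul1r; congr (_ - _).
case: i => [[|i'] ilt] /=.
  by rewrite big1 // => k _; rewrite mul0r.
under eq_bigr => k _ do rewrite eqSS.
by rewrite sum_delta (ltn_trans (ltnSn i') ilt) mul1r.
Qed.

Lemma A2_sum (T : pzRingType) n (j : 'I_n) (f : nat -> T) :
  \sum_(l < n) (A2 n j l)%:~R * f l = ((j.+1 < n)%N : nat)%:R * f j.+1 - f j.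
Proof.
under eq_bigr => k _ do rewrite mxE rmorphB /= !rmorph_nat mulrBl.
by rewrite sumrB !sum_delta ltn_ord mul1r.
Qed.

Lemma quad (T : comPzRingType) m n (x : 'cV[T]_m) (A : 'M[T]_(m, n)) (y : 'cV[T]_n) :
  (x^T *m A *m y) 0 0 = \sum_i \sum_j x i 0 * A i j * y j 0.
Proof.
rewrite mxE; under eq_bigr => j _ do rewrite mxE big_distrl /=.
rewrite exchange_big; apply: eq_bigr => i _; apply: eq_bigr => j _.
by rewrite !mxE.
Qed.

Lemma bilin (T : comPzRingType) n1 n2 (C : 'M[int]_(n1, n2)) (M1 : 'M[int]_n1) (M2 : 'M[int]_n2)
   (g : 'I_n1 -> T) (f : 'I_n2 -> T) :
  \sum_i \sum_j (C i j)%:~R * ((\sum_k (M1 i k)%:~R * g k) * (\sum_l (M2 j l)%:~R * f l))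
  = \sum_k \sum_l ((M1^T *m C *m M2) k l)%:~R * (g k * f l).
Proof.
pose gc : 'cV[T]_n1 := \col_k g k.
pose fc : 'cV[T]_n2 := \col_l f l.
pose mp := fun m n (B : 'M[int]_(m, n)) => map_mx (fun z : int => (z%:~R : T)) B.
have -> : \sum_k \sum_l ((M1^T *m C *m M2) k l)%:~R * (g k * f l) =
    (gc^T *m mp _ _ (M1^T *m C *m M2) *m fc) 0 0.
  rewrite quad; apply: eq_bigr => k _; apply: eq_bigr => l _.
  rewrite !mxE; ring.
rewrite /mp !map_mxM -map_trmx.
set M1f := map_mx _ M1; set M2f := map_mx _ M2; set Cf := map_mx _ C.
have -> : gc^T *m (M1f^T *m Cf *m M2f) *m fc = (M1f *m gc)^T *m Cf *m (M2f *m fc).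
  by rewrite trmx_mul !mulmxA.
rewrite quad.
apply: eq_bigr => i _; apply: eq_bigr => j _.
rewrite !mxE.
have -> : \sum_j0 M1f i j0 * gc j0 0 = \sum_k (M1 i k)%:~R * g k.
  by apply: eq_bigr => k _; rewrite !mxE.
have -> : \sum_j0 M2f j j0 * fc j0 0 = \sum_l (M2 j l)%:~R * f l.
  by apply: eq_bigr => l _; rewrite !mxE.
rewrite /=; ring.
Qed.
Definition unmx m n (x : 'I_(m * n)) : 'I_m * 'I_n :=
  enum_val (cast_ord (esym (mxvec_cast m n)) x).

Lemma unmx_index m n (i : 'I_m) (j : 'I_n) : unmx (mxvec_index i j) = (i, j).
Proof. by rewrite /unmx /mxvec_index cast_ordK enum_rankK. Qed.

Lemma mxvec_index_eq m n (i i' : 'I_m) (j j' : 'I_n) :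
  (mxvec_index i j == mxvec_index i' j') = (i == i') && (j == j').
Proof.
apply/eqP/andP => [e|[/eqP -> /eqP ->] //].
by have := congr1 (@unmx m n) e; rewrite !unmx_index => -[-> ->].
Qed.

Lemma mxvec_unmx (T : Type) m n (A : 'M[T]_(m, n)) x :
  mxvec A 0 x = A (unmx x).1 (unmx x).2.
Proof. by case/mxvec_indexP: x => i j; rewrite mxvecE unmx_index. Qed.

Lemma sum_unmx (T : nmodType) m n (F : 'I_m -> 'I_n -> T) :
  \sum_(x < m * n) F (unmx x).1 (unmx x).2 = \sum_i \sum_j F i j.
Proof.
rewrite pair_big /= (reindex (fun p : 'I_m * 'I_n => mxvec_index p.1 p.2)) /=.
  by apply: eq_bigr => -[i j] _; rewrite unmx_index.
exists (@unmx m n) => [[i j] _ | x _] /=; first by rewrite unmx_index.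
by case/mxvec_indexP: x => i j; rewrite unmx_index.
Qed.

Lemma A1_unit n : A1 n \in unitmx.
Proof.
rewrite unitmxE det_trig.
  rewrite big1 ?unitr1 //; move=> i _.
  by rewrite mxE eqxx (gtn_eqF (ltnSn i)) subr0.
apply/is_trig_mxP => i k ik; rewrite mxE.
by rewrite (ltn_eqF ik) gtn_eqF ?subrr // (ltn_trans ik).
Qed.

Lemma A2_unit n : A2 n \in unitmx.
Proof.
rewrite -unitmx_tr unitmxE det_trig.
  rewrite (eq_bigr (fun _ => -1)); last by move=> i _; rewrite !mxE eqxx (ltn_eqF (ltnSn i)) sub0r.
  by rewrite prodr_const unitrX // unitrN1.
apply/is_trig_mxP => j l jl; rewrite !mxE.
by rewrite (ltn_eqF jl) ltn_eqF ?subrr // (ltn_trans jl).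
Qed.

Definition cnd m n2 (i : 'I_m) (j : 'I_n2) : bool := ((i : nat) == 0%N) && (j.+1 == n2).

Lemma sum_A1CA2 n1 n2 (C : 'M[int]_(n1, n2)) :
  \sum_k \sum_l ((A1 n1)^T *m C *m A2 n2) k l =
  - \sum_i \sum_j (if cnd i j then C i j else 0).
Proof.
pose one m : 'cV[int]_m := const_mx 1.
have -> : \sum_k \sum_l ((A1 n1)^T *m C *m A2 n2) k l =
   ((one n1)^T *m ((A1 n1)^T *m C *m A2 n2) *m one n2) 0 0.
  by rewrite quad; apply: eq_bigr => k _; apply: eq_bigr => l _; rewrite !mxE mul1r mulr1.
have -> : (one n1)^T *m ((A1 n1)^T *m C *m A2 n2) *m one n2 =
   (A1 n1 *m one n1)^T *m C *m (A2 n2 *m one n2) by rewrite trmx_mul !mulmxA.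
rewrite quad -sumrN; apply: eq_bigr => i _; rewrite -sumrN; apply: eq_bigr => j _.
have -> : (A1 n1 *m one n1) i 0 = ((i : nat) == 0%N)%:R.
  rewrite mxE (eq_bigr (fun k => (A1 n1 i k)%:~R * (fun _ => 1 : int) k)); last first.
    by move=> k _; rewrite intz [one _ _ _]mxE.
  rewrite (A1_sum _ (fun _ => 1)); case: (i : nat) => [|i'] /=; first by rewrite subr0.
  by rewrite subrr.
have -> : (A2 n2 *m one n2) j 0 = - (j.+1 == n2)%:R.
  rewrite mxE (eq_bigr (fun l => (A2 n2 j l)%:~R * (fun _ => 1 : int) l)); last first.
    by move=> l _; rewrite intz [one _ _ _]mxE.
  rewrite (A2_sum _ (fun _ => 1)) !mulr1.
  have := ltn_ord j; rewrite leq_eqVlt; case/orP => [/eqP ->|jl].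
    by rewrite ltnn eqxx sub0r.
  by rewrite jl (ltn_eqF jl) subrr oppr0.
rewrite /cnd; case: ((i : nat) == 0%N); case: (j.+1 == n2); rewrite /=;
  by rewrite ?mul1r ?mul0r ?mulr0 ?mulrN1 ?oppr0.
Qed.

Lemma sum_cnd n1 n2 (C : 'M[int]_(n1, n2)) i j : cnd i j ->
  \sum_i' \sum_j' (if cnd i' j' then C i' j' else 0) = C i j.
Proof.
move=> c; have e : forall i' j', cnd i' j' = (i' == i) && (j' == j).
  move: c; rewrite /cnd => /andP[/eqP i0 /eqP j1] i' j'.
  rewrite -!val_eqE /= i0; congr andb.
  by rewrite -[X in _ = X]eqSS j1.
rewrite (bigD1 i) //= [X in _ + X]big1 ?addr0; last first.
  by move=> i' /negbTE ni; apply: big1 => j' _; rewrite e ni.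
rewrite (bigD1 j) //= e !eqxx /= [X in _ + X]big1 ?addr0 // => j' /negbTE nj.
by rewrite e nj andbF.
Qed.
Definition kap (R : realType) (r p : nat) : R := (Num.sqrt (((2 ^ (r - 1) * p)%N)%:R))^-1.
Definition Qm (R : realType) (r p : nat) : 'M[R]_(2 ^ (r - 2) * ((p - 1) %/ 2)) :=
  \matrix_(x, y) (kap R r p * (Gn R r (unmx x).1 (unmx y).1 * Fn R p (unmx x).2 (unmx y).2)).

Lemma Q_orth (R : realType) (r p : nat) : (3 <= r)%N -> prime p -> (5 <= p)%N ->
  Qm R r p *m (Qm R r p)^T = 1%:M.
Proof.
move=> r3 pp p5.
apply/matrixP => x z; case/mxvec_indexP: x => a b; case/mxvec_indexP: z => c d.
rewrite !mxE mxvec_index_eq.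
under eq_bigr do rewrite !mxE !unmx_index /=.
rewrite (sum_unmx (fun s t => kap R r p * (Gn R r a s * Fn R p b t) *
                        (kap R r p * (Gn R r c s * Fn R p d t)))).
have -> : \sum_(i < (2 ^ (r - 2))%N) \sum_(j < ((p - 1) %/ 2)%N) kap R r p * (Gn R r a i * Fn R p b j) *
        (kap R r p * (Gn R r c i * Fn R p d j)) =
   kap R r p ^+ 2 * ((\sum_(i < (2 ^ (r - 2))%N) Gn R r a i * Gn R r c i) *
       (\sum_(j < ((p - 1) %/ 2)%N) Fn R p b j * Fn R p d j)).
  rewrite big_distrlr big_distrr /=; apply: eq_bigr => i _.
  rewrite big_distrr /=; apply: eq_bigr => j _; ring.
rewrite orthoG // orthoF //.
have kk : kap R r p ^+ 2 * ((2 ^ (r - 1))%N%:R * p%:R) = 1.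
  rewrite /kap exprVn sqr_sqrtr ?ler0n // -natrM mulVf //.
  by rewrite pnatr_eq0 muln_eq0 negb_or expn_eq0 /=; apply/eqP => e; rewrite e in p5.
rewrite -!val_eqE /=.
case: (_ == _); case: (_ == _); rewrite /= ?mul1r ?mul0r ?mulr0 //.
Qed.
Definition Cm (r p : nat) (k : 'M[int]_(2 ^ (r - 2), (p - 1) %/ 2)) :
   'M[int]_(2 ^ (r - 2), (p - 1) %/ 2) :=
  \matrix_(i, j) (k i j * (if cnd i j then 2 else 1)).

Lemma key (R : realType) (r p : nat) (k : 'M[int]_(2 ^ (r - 2), (p - 1) %/ 2)) :
  (3 <= r)%N -> prime p -> (5 <= p)%N ->
  (Num.sqrt (((2 ^ (r - 1) * p)%N)%:R))^-1 *:
        \sum_(i < 2 ^ (r - 2)) \sum_(j < (p - 1) %/ 2)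
           (k i j)%:~R *: @sigma_alpha_gamma R r p i j =
  map_mx intr (mxvec ((A1 _)^T *m Cm k *m A2 _)) *m Qm R r p.
Proof.
move=> r3 pp p5.
apply/rowP => y; case/mxvec_indexP: y => s t.
rewrite !mxE summxE.
under eq_bigr do rewrite summxE.
under [RHS]eq_bigr do rewrite !mxE unmx_index mxvec_unmx /=.
have hX : forall i : 'I_(2 ^ (r - 2)),
    \sum_a (A1 _ i a)%:~R * Gn R r a s = Num.sqrt (2 - emb_e R r s 1) * emb_e R r s i.
  by move=> i; rewrite (A1_sum _ (fun a => Gn R r a s)) X_eq.
have hW : forall j : 'I_((p - 1) %/ 2),
    \sum_b (A2 _ j b)%:~R * Fn R p b t = Num.sqrt (2 - emb_b R p t 1) * emb_b R p t j.+1.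
  move=> j; rewrite (A2_sum _ (fun b => Fn R p b t)) W_eq //.
  have := ltn_ord j; rewrite leq_eqVlt; case/orP => [/eqP e|jl].
    by rewrite e ltnn mul0r Fn_last // subr0 sub0r.
  by rewrite jl mul1r.
have hal : Num.sqrt (emb_alpha R r p s t) =
    Num.sqrt (2 - emb_e R r s 1) * Num.sqrt (2 - emb_b R p t 1).
  rewrite /emb_alpha sqrtrM //.
  have h2 : forall x : R, 0 <= 2 - 2 * cos x by move=> x; have := cos_le1 x; lra.
  rewrite /emb_e /=; exact: h2.
transitivity (kap R r p * \sum_(i < 2 ^ (r - 2)) \sum_(j < (p - 1) %/ 2) (Cm k i j)%:~R *
    ((\sum_a (A1 _ i a)%:~R * Gn R r a s) * (\sum_b (A2 _ j b)%:~R * Fn R p b t))).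
  congr (_ * _); apply: eq_bigr => i _; apply: eq_bigr => j _.
  rewrite hX hW mxE /sigma_alpha_gamma mxvecE !mxE hal rmorphM /=.
  have -> : gamma_coef R ((p - 1) %/ 2) i j = (if cnd i j then 2 else 1 : int)%:~R.
    by rewrite /gamma_coef /cnd; case: ifP.
  ring.
rewrite bilin (sum_unmx (fun a b => (((A1 (2 ^ (r - 2)))^T *m Cm k *m A2 ((p - 1) %/ 2)) a b)%:~R *
     (kap R r p * (Gn R r a s * Fn R p b t)))) big_distrr.
apply: eq_bigr => a _; rewrite big_distrr; apply: eq_bigr => b _ /=; ring.
Qed.
Lemma dvdzNr (d m : int) : (d %| (- m)%R)%Z = (d %| m)%Z.
Proof. by rewrite !dvdzE abszN. Qed.

Theorem proposition3p4 (R : realType) (r p : nat) :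
  (3 <= r)%N -> prime p -> (5 <= p)%N ->
  rotated_Dn (@scaled_lattice R r p).
Proof.
move=> r3 pp p5.
exists (Qm R r p); split; first exact: Q_orth.
have sumD : forall D : 'M[int]_(2 ^ (r - 2), (p - 1) %/ 2),
    \sum_(x < 2 ^ (r - 2) * ((p - 1) %/ 2)) mxvec D 0 x = \sum_i \sum_j D i j.
  move=> D; under eq_bigr do rewrite mxvec_unmx.
  exact: (sum_unmx (fun a b => D a b)).
move=> v; split.
- case=> k ->; exists (mxvec ((A1 _)^T *m Cm k *m A2 _)); split; last exact: key.
  rewrite /Dn sumD sum_A1CA2 dvdzNr.
  have -> : \sum_i \sum_j (if cnd i j then Cm k i j else 0) =
      2 * \sum_i \sum_j (if cnd i j then k i j else 0).
    rewrite big_distrr; apply: eq_bigr => i _; rewrite big_distrr; apply: eq_bigr => j _.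
    rewrite /Cm mxE; case: ifP => c /=; first by rewrite c mulrC.
    by rewrite mulr0.
  exact: dvdz_mulr (dvdzz 2).
- case=> d [Dd ->].
  pose D := vec_mx d.
  pose C0 := invmx (A1 (2 ^ (r - 2)))^T *m D *m invmx (A2 ((p - 1) %/ 2)).
  have eD : (A1 _)^T *m C0 *m A2 _ = D.
    rewrite /C0 !mulmxA mulmxV ?unitmx_tr ?A1_unit // mul1mx -mulmxA mulVmx ?A2_unit //.
    by rewrite mulmx1.
  have ev : forall i j, cnd i j -> (2 %| C0 i j)%Z.
    move=> i j c; rewrite -(sum_cnd C0 c) -dvdzNr -sum_A1CA2 eD -sumD /D vec_mxK.
    exact: Dd.
  pose km := \matrix_(i, j) (if cnd i j then (C0 i j %/ 2)%Z else C0 i j).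
  have eC : Cm km = C0.
    apply/matrixP => i j; rewrite /Cm mxE [km i j]mxE; case: ifP => c; last by rewrite mulr1.
    exact: divzK (ev _ _ c).
  exists km; rewrite key // eC eD /D vec_mxK //.
Qed.
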